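(* Let $\vec d=(\vec a,\vec b)$ be a bidegree sequence of length $n$ with the entries of $\vec a$ in non-increasing order and $\sum_{i=1}^n a_i=\sum_{i=1}^n b_i=n\bar c$. Let $M_a=\max_i a_i$ and $M_b=\max_i b_i$. If $M_aM_b\le n\bar c+1$, then $\vec d$ is graphic with loops. In particular, if $\max_i a_i=\max_i b_i$ and $\max\vec d\le\lfloor\sqrt{n\bar c+1}\rfloor$, then $\vec d$ is graphic with loops.
   Context: A bidegree sequence of length $n$ is a pair $\vec d=(\vec a,\vec b)$ with $\vec a=(a_1,\dots,a_n)\in\mathbb{N}_0^n$ and $\vec b=(b_1,\dots,b_n)\in\mathbb{N}_0^n$. It is graphic with loops if there is an $n\times n$ matrix with entries in $\{0,1\}$ whose $i$th row sum is $a_i$ and whose $i$th column sum is $b_i$ for every $i\in[1..n]$; it is graphic if such a matrix exists with all diagonal entries equal to $0$. $\max\vec d$ and $\min\vec d$ denote the maximum and minimum over all $2n$ entries $a_1,\dots,a_n,b_1,\dots,b_n$. The number $\bar c$ (the average degree) is defined by $\sum_i a_i=\sum_i b_i=n\bar c$. *)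

(* Defs.v *)
From mathcomp Require Import all_boot.
From Stdlib Require Import PeanoNat.
Set Implicit Arguments. Unset Strict Implicit. Unset Printing Implicit Defensive.

(* graphic with loops: some 0/1 matrix (entries in bool) with row sums a
   and column sums b; diagonal entries unrestricted. *)
Definition graphic_with_loops (n : nat) (a b : 'I_n -> nat) : Prop :=
  exists M : 'I_n -> 'I_n -> bool,
    (forall i, \sum_(j < n) (M i j : nat) = a i) /\
    (forall j, \sum_(i < n) (M i j : nat) = b j).

Definition nonincreasing (n : nat) (a : 'I_n -> nat) : Prop :=
  forall i j : 'I_n, i <= j -> a j <= a i.

Definition maxd (n : nat) (a b : 'I_n -> nat) : nat :=
  maxn (\max_(i < n) a i) (\max_(i < n) b i).

(* Main.v *)
Require Import Defs.
From mathcomp Require Import all_boot.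
From Stdlib Require Import PeanoNat.
From mathcomp Require Import zify.

Section S.
Variable n : nat.
Implicit Types a b : 'I_n -> nat.

Lemma term_le_sum (F : 'I_n -> nat) i : F i <= \sum_(j < n) F j.
Proof. by rewrite (bigD1 i) //= leq_addr. Qed.

Lemma graphic_T a b : graphic_with_loops a b -> graphic_with_loops b a.
Proof.
case=> M [Hr Hc]; exists (fun i j => M j i); split; [exact: Hc | exact: Hr].
Qed.

Lemma row_step a b (i0 : 'I_n) (C : {set 'I_n}) :
  #|C| = a i0 -> C \subset [set j | 0 < b j] ->
  graphic_with_loops (fun i => if i == i0 then 0 else a i)
                     (fun j => b j - (j \in C)) ->
  graphic_with_loops a b.
Proof.
move=> HC HCP [M [Hr Hc]].
have M0 : forall j, M i0 j = false.
  move=> j; have := Hr i0; rewrite eqxx (bigD1 j) //=.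
  by case: (M i0 j).
exists (fun i j => if i == i0 then j \in C else M i j); split.
- move=> i; case: eqP => [->|Hne].
    rewrite -HC -sum1_card [RHS]big_mkcond /=.
    by apply: eq_bigr => j _; case: (j \in C).
  by have := Hr i; case: eqP.
- move=> j; have := Hc j; rewrite (bigD1 i0) //= M0 add0n => Hs.
  rewrite (bigD1 i0) //= eqxx.
  have -> : \sum_(i < n | i != i0) ((if i == i0 then j \in C else M i j) : nat)
            = \sum_(i < n | i != i0) (M i j : nat).
    by apply: eq_bigr => i /negPf ->.
  rewrite Hs.
  case HjC: (j \in C) => /=; last by rewrite subn0.
  have : j \in [set j | 0 < b j] by apply: (subsetP HCP).
  rewrite inE => Hb; lia.
Qed.

Lemma sum_zero_row a (i0 : 'I_n) :
  \sum_(i < n) (if i == i0 then 0 else a i) = \sum_(i < n) a i - a i0.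
Proof.
rewrite [in RHS](bigD1 i0) //= (bigD1 i0) //= eqxx add0n.
rewrite addKn; apply: eq_bigr => i /negPf -> //.
Qed.

Lemma sum_subC b (C : {set 'I_n}) : C \subset [set j | 0 < b j] ->
  \sum_(j < n) (b j - (j \in C)) = \sum_(j < n) b j - #|C|.
Proof.
move=> HCP.
have E : \sum_(j < n) b j = \sum_(j < n) (b j - (j \in C)) + #|C|.
  rewrite -sum1_card [X in _ + X]big_mkcond /= -big_split /=.
  apply: eq_bigr => j _; case HjC: (j \in C) => //=; last by rewrite subn0 addn0.
  have : j \in [set j | 0 < b j] by apply: (subsetP HCP).
  rewrite inE => Hb; lia.
by rewrite E addnK.
Qed.

Lemma exists_mid (Q P : {set 'I_n}) k : Q \subset P -> #|Q| <= k <= #|P| ->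
  exists C : {set 'I_n}, [/\ Q \subset C, C \subset P & #|C| = k].
Proof.
move=> HQP; elim: k => [|k IH].
  rewrite leqn0 => /andP[/eqP /cards0_eq -> _]; exists set0; split => //.
  - exact: sub0set.
  - by rewrite cards0.
move=> /andP[Hq Hp].
case: (leqP #|Q| k) => Hk; last first.
  exists Q; split => //; apply/eqP; rewrite eqn_leq Hq /=; exact: Hk.
have [C [H1 H2 H3]] : exists C : {set 'I_n}, [/\ Q \subset C, C \subset P & #|C| = k].
  by apply: IH; rewrite Hk /= ltnW.
have : ~~ (P \subset C).
  apply/negP => /subset_leq_card; rewrite H3; lia.
case/subsetPn => x HxP HxC.
exists (x |: C); split.
- by apply: (subset_trans H1); apply: subsetUr.
- by rewrite subUset sub1set HxP H2.
- by rewrite cardsU1 HxC H3.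
Qed.
Lemma sum_set_le (F : 'I_n -> nat) (X : {set 'I_n}) :
  \sum_(i in X) F i <= \sum_(i < n) F i.
Proof. by rewrite [X in _ <= X](bigID (mem X)) /= leq_addr. Qed.

Lemma sum_set_const (F : 'I_n -> nat) c :
  \sum_(i in [set i | F i == c]) F i = #|[set i | F i == c]| * c.
Proof.
rewrite -sum_nat_const; apply: eq_bigr => i; by rewrite inE => /eqP.
Qed.

Lemma sum_pos_le (F : 'I_n -> nat) c : (forall i, F i <= c) ->
  \sum_(i < n) F i <= #|[set i | 0 < F i]| * c.
Proof.
move=> Hc.
rewrite (bigID (mem [set i | 0 < F i])) /= [X in _ + X]big1; last first.
  by move=> i; rewrite inE; case: (F i).
rewrite addn0 -sum_nat_const; exact: leq_sum.
Qed.

Lemma main S : forall a b, \sum_(i < n) a i = S -> \sum_(i < n) b i = S ->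
  (\max_(i < n) a i) * (\max_(i < n) b i) <= S + 1 -> graphic_with_loops a b.
Proof.
elim/ltn_ind: S => S IH.
have key : forall a b, \sum_(i < n) a i = S -> \sum_(i < n) b i = S ->
  (\max_(i < n) a i) * (\max_(i < n) b i) <= S + 1 -> 0 < S ->
  (#|[set j | b j == \max_(i < n) b i]| <= \max_(i < n) a i \/
   (\max_(i < n) a i) * (\max_(i < n) b i) + \max_(i < n) a i <= S) ->
  graphic_with_loops a b.
  move=> a b Ha Hb Hab HS Hc.
  case: (pickP (fun i => 0 < a i)) => [i Hi|H0]; last first.
    exfalso; move: Ha; rewrite big1 => [|j _]; first lia.
    by move: (H0 j); case: (a j).
  have [i0 Hi0] := eq_bigmax a (ltac:(apply/card_gt0P; exists i; done)).
  set A := \max_(i < n) a i in Hab Hc Hi0 *.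
  set B := \max_(i < n) b i in Hab Hc *.
  have HA : 0 < A by apply: (leq_trans Hi); apply: leq_bigmax.
  have HAS : A <= S by rewrite Hi0 -Ha term_le_sum.
  have HbB : forall j, b j <= B by move=> j; apply: leq_bigmax.
  set P := [set j | 0 < b j].
  have HSP : S <= #|P| * B by rewrite -Hb; apply: sum_pos_le.
  have HP : A <= #|P|.
    rewrite leqNgt; apply/negP => HPl.
    have HB1 : B <= 1 by nia.
    have : S <= #|P| by nia.
    lia.
  have HB : 0 < B by nia.
  have Hrec : forall C : {set 'I_n}, C \subset P -> #|C| = A ->
      (forall j, b j - (j \in C) <= B - 1) \/ A * B + A <= S ->
      graphic_with_loops a b.
    move=> C HCP HCA Hcase.
    apply: (@row_step a b i0 C); first by rewrite HCA -Hi0.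
      exact: HCP.
    apply: (IH (S - A)); first lia.
    - by rewrite sum_zero_row Ha Hi0.
    - by rewrite sum_subC // Hb HCA.
    have HA' : \max_(i < n) (if i == i0 then 0 else a i) <= A.
      apply/bigmax_leqP => j _; case: eqP => // _; exact: leq_bigmax.
    have HB' : \max_(i < n) (b i - (i \in C)) <= B.
      apply/bigmax_leqP => j _; exact: (leq_trans (leq_subr _ _) (HbB j)).
    case: Hcase => [Hj|Hs].
      have HB'' : \max_(i < n) (b i - (i \in C)) <= B - 1 by apply/bigmax_leqP => j _.
      apply: (leq_trans (leq_mul HA' HB'')); nia.
    apply: (leq_trans (leq_mul HA' HB')); nia.
  case: Hc => [Hq|Hs].
  - set Q := [set j | b j == B] in Hq.
    have HQP : Q \subset P.
      by apply/subsetP => j; rewrite !inE => /eqP ->.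
    have [C [H1 H2 H3]] := exists_mid Q P A HQP (ltac:(by rewrite Hq HP)).
    apply: (Hrec C H2 H3); left => j.
    case HjC: (j \in C) => /=; first by apply: leq_sub2r.
    have : j \notin Q by apply/negP => /(subsetP H1); rewrite HjC.
    rewrite inE subn0 => Hne; have := HbB j; lia.
  - have [C [H1 H2 H3]] := exists_mid set0 P A (sub0set P) (ltac:(by rewrite cards0 HP)).
    apply: (Hrec C H2 H3); by right.
move=> a b Ha Hb Hab.
case: (posnP S) => [HS0|HSpos].
  exists (fun _ _ => false); split => i; rewrite big1 //.
    by have := term_le_sum a i; rewrite Ha HS0; case: (a i).
  by have := term_le_sum b i; rewrite Hb HS0; case: (b i).
set A := \max_(i < n) a i in Hab *.
set B := \max_(i < n) b i in Hab *.
case: (leqP #|[set i | a i == A]| B) => h.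
  apply: graphic_T; apply: key => //; first by rewrite mulnC.
  by left.
apply: key => //; right.
have := sum_set_le a [set i | a i == A]; rewrite sum_set_const Ha.
nia.
Qed.
End S.

(* n * cbar = \sum_i a_i = \sum_i b_i; floor(sqrt(n*cbar+1)) = Nat.sqrt (S + 1). *)
Theorem theorem3 (n : nat) (a b : 'I_n -> nat) :
  nonincreasing a ->
  \sum_(i < n) a i = \sum_(i < n) b i ->
  ((\max_(i < n) a i) * (\max_(i < n) b i) <= \sum_(i < n) a i + 1 ->
     graphic_with_loops a b) /\
  (\max_(i < n) a i = \max_(i < n) b i ->
   maxd a b <= Nat.sqrt (\sum_(i < n) a i + 1) ->
     graphic_with_loops a b).
Proof.
move=> _ Hs; split.
  by move=> H; apply: (@main n (\sum_(i < n) a i) a b).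
move=> Heq Hm; apply: (@main n (\sum_(i < n) a i) a b) => //.
move: Hm; rewrite /maxd -Heq maxnn => Hm.
have := Nat.sqrt_spec (\sum_(i < n) a i + 1) (Nat.le_0_l _).
case=> H1 _.
apply: (leq_trans (leq_mul Hm Hm)).
by apply/leP; rewrite -multE.
Qed.
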